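(* Let $S$ be an intra-regular $\Gamma$-AG$^{**}$-groupoid and $A$ a nonempty subset of $S$. The following are equivalent: (i) $A$ is a left $\Gamma$-ideal of $S$; (ii) $A$ is a right $\Gamma$-ideal; (iii) $A$ is a two-sided $\Gamma$-ideal; (iv) $A\Gamma S=A$ and $S\Gamma A=A$; (v) $A$ is a $\Gamma$-quasi ideal; (vi) $A$ is a $\Gamma$-$(1,2)$-ideal; (vii) $A$ is a $\Gamma$-generalized bi-ideal; (viii) $A$ is a $\Gamma$-bi-ideal; (ix) $A$ is a $\Gamma$-interior ideal.
   Context: Let $S$ and $\Gamma$ be nonempty sets with a map $S\times\Gamma\times S\to S$, $(x,\gamma,y)\mapsto x\gamma y$. $S$ is a $\Gamma$-AG-groupoid if $(x\gamma y)\delta z=(z\gamma y)\delta x$ for all $x,y,z\in S$, $\gamma,\delta\in\Gamma$; it is a $\Gamma$-AG$^{**}$-groupoid if moreover $a\alpha(b\beta c)=b\alpha(a\beta c)$ for all $a,b,c\in S$, $\alpha,\beta\in\Gamma$. For subsets $A,B\subseteq S$, $A\Gamma B=\{a\gamma b: a\in A,\gamma\in\Gamma,b\in B\}$. $S$ is intra-regular if for every $a\in S$ there exist $x,y\in S$ and $\beta,\gamma,\delta\in\Gamma$ with $a=(x\beta(a\delta a))\gamma y$. For a nonempty $A\subseteq S$: left (right) $\Gamma$-ideal means $S\Gamma A\subseteq A$ ($A\Gamma S\subseteq A$); two-sided $\Gamma$-ideal means both; $\Gamma$-generalized bi-ideal means $(A\Gamma S)\Gamma A\subseteq A$. The following all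 require $A\Gamma A\subseteq A$ in addition: $\Gamma$-bi-ideal: $(A\Gamma S)\Gamma A\subseteq A$; $\Gamma$-interior ideal: $(S\Gamma A)\Gamma S\subseteq A$; $\Gamma$-quasi ideal: $S\Gamma A\cap A\Gamma S\subseteq A$; $\Gamma$-$(1,2)$-ideal: $(A\Gamma S)\Gamma(A\Gamma A)\subseteq A$. *)

(* Defs.v *)
From Stdlib Require Import Classical.

Section Gamma.
Variables (S G : Type) (op : S -> G -> S -> S).

Definition is_GAG : Prop :=
  forall (x y z : S) (g d : G), op (op x g y) d z = op (op z g y) d x.

Definition is_GAGss : Prop :=
  is_GAG /\ forall (a b c : S) (al be : G), op a al (op b be c) = op b al (op a be c).

Definition gprod (A B : S -> Prop) : S -> Prop :=
  fun x => exists a g b, A a /\ B b /\ x = op a g b.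

Definition fullset : S -> Prop := fun _ => True.

Definition subset (A B : S -> Prop) : Prop := forall x, A x -> B x.
Definition seteq (A B : S -> Prop) : Prop := forall x, A x <-> B x.
Definition inter (A B : S -> Prop) : S -> Prop := fun x => A x /\ B x.

Definition intra_regular : Prop :=
  forall a : S, exists (x y : S) (be ga de : G), a = op (op x be (op a de a)) ga y.

Definition left_ideal (A : S -> Prop) : Prop := subset (gprod fullset A) A.
Definition right_ideal (A : S -> Prop) : Prop := subset (gprod A fullset) A.
Definition two_sided_ideal (A : S -> Prop) : Prop := left_ideal A /\ right_ideal A.
Definition gen_bi_ideal (A : S -> Prop) : Prop :=
  subset (gprod (gprod A fullset) A) A.
Definition subgroupoid (A : S -> Prop) : Prop := subset (gprod A A) A.
Definition bi_ideal (A : S -> Prop) : Prop :=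
  subgroupoid A /\ subset (gprod (gprod A fullset) A) A.
Definition interior_ideal (A : S -> Prop) : Prop :=
  subgroupoid A /\ subset (gprod (gprod fullset A) fullset) A.
Definition quasi_ideal (A : S -> Prop) : Prop :=
  subgroupoid A /\ subset (inter (gprod fullset A) (gprod A fullset)) A.
Definition one_two_ideal (A : S -> Prop) : Prop :=
  subgroupoid A /\ subset (gprod (gprod A fullset) (gprod A A)) A.

End Gamma.
Arguments is_GAG {S G}.
Arguments is_GAGss {S G}.
Arguments gprod {S G}.
Arguments fullset : clear implicits.
Arguments intra_regular {S G}.
Arguments left_ideal {S G}.
Arguments right_ideal {S G}.
Arguments two_sided_ideal {S G}.
Arguments gen_bi_ideal {S G}.
Arguments subgroupoid {S G}.
Arguments bi_ideal {S G}.
Arguments interior_ideal {S G}.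
Arguments quasi_ideal {S G}.
Arguments one_two_ideal {S G}.
Arguments seteq {S}.
Arguments subset {S}.
Arguments inter {S}.

(* Main.v *)
Require Import Defs.
From Stdlib Require Import Classical.

Section Aux.
Variables (S G : Type) (op : S -> G -> S -> S).
Hypothesis HL : forall (x y z : S) (g d : G), op (op x g y) d z = op (op z g y) d x.
Hypothesis HM : forall (a b c : S) (al be : G), op a al (op b be c) = op b al (op a be c).
Lemma cL {l l' : S} (g : G) (r : S) (P : l = l') : op l g r = op l' g r.
Proof. now rewrite P. Qed.
Lemma cR (l : S) (g : G) {r r' : S} (P : r = r') : op l g r = op l g r'.
Proof. now rewrite P. Qed.
Variables (a s x y : S) (e be ga de : G).
Hypothesis Ha : a = op (op x be (op a de a)) ga y.
Lemma E_lr : (op a e s) = (op (op s ga y) e (op x be (op a de a))).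
Proof using All. exact (eq_trans (cL e s Ha) (eq_trans (HL (op x be (op a de a)) y s ga e) eq_refl)). Qed.
Lemma E_rl : (op s e a) = (op (op a be (op x de a)) e (op s ga y)).
Proof using All. exact (eq_trans (cR s e Ha) (eq_trans (HM s (op x be (op a de a)) y e ga) (eq_trans (cL e (op s ga y) (HM x a a be de)) eq_refl))). Qed.
Lemma E_as : a = (op (op x be (op a de a)) ga y).
Proof using All. exact (eq_trans Ha eq_refl). Qed.
Lemma E_sa : a = (op (op y be (op x de a)) ga a).
Proof using All. exact (eq_trans Ha (eq_trans (cL ga y (HM x a a be de)) (eq_trans (HL a (op x de a) y be ga) eq_refl))). Qed.
Lemma E_q : (op s e a) = (op (op a de a) e (op (op x be s) ga y)).
Proof using All. exact (eq_trans (cR s e Ha) (eq_trans (HM s (op x be (op a de a)) y e ga) (eq_trans (HL x (op a de a) (op s ga y) be e) (eq_trans (cL e x (HL s y (op a de a) ga be)) (eq_trans (HL (op (op a de a) ga y) s x be e) (eq_trans (HM (op x be s) (op a de a) y e ga) eq_refl)))))). Qed.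
Lemma E_ot : (op s e a) = (op (op a de (op (op (op (op s ga y) be x) be x) ga y)) e (op a de a)).
Proof using All. exact (eq_trans (cR s e Ha) (eq_trans (HM s (op x be (op a de a)) y e ga) (eq_trans (cL e (op s ga y) (cR x be (cR a de Ha))) (eq_trans (cL e (op s ga y) (cR x be (HM a (op x be (op a de a)) y de ga))) (eq_trans (cL e (op s ga y) (HM x (op x be (op a de a)) (op a ga y) be de)) (eq_trans (cL e (op s ga y) (HL x (op a de a) (op x de (op a ga y)) be be)) (eq_trans (HL (op (op x de (op a ga y)) be (op a de a)) x (op s ga y) be e) (eq_trans (cR (op (op s ga y) be x) e (HL x (op a ga y) (op a de a) de be)) (eq_trans (HM (op (op s ga y) be x) (op (op a de a) de (op a ga y)) x e be) (eq_trans (HL (op a de a) (op a ga y) (op (op (op s ga y) be x) be x) de e) (eq_trans (cL e (op a de a) (HM (op (op (op s ga y) be x) be x) a y de ga)) eq_refl))))))))))). Qed.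
Lemma E_gb : (op s e a) = (op (op a be (op (op (op (op s ga y) de (op x ga y)) be (op x de (op x be (op a de a)))) ga y)) e a).
Proof using All. exact (eq_trans (cR s e Ha) (eq_trans (HM s (op x be (op a de a)) y e ga) (eq_trans (cL e (op s ga y) (HM x a a be de)) (eq_trans (HL a (op x de a) (op s ga y) be e) (eq_trans (cL e a (cR (op s ga y) be (cR x de Ha))) (eq_trans (cL e a (cR (op s ga y) be (HM x (op x be (op a de a)) y de ga))) (eq_trans (cL e a (HM (op s ga y) (op x be (op a de a)) (op x ga y) be de)) (eq_trans (cL e a (cL be (op (op s ga y) de (op x ga y)) (cR x be (cL de a Ha)))) (eq_trans (cL e a (cL be (op (op s ga y) de (op x ga y)) (cR x be (HL (op x be (op a de a)) y a ga de)))) (eq_trans (cL e a (cL be (op (op s ga y) de (op x ga y)) (HM x (op a ga y) (op x be (op a de a)) be de))) (eq_trans (cL e a (HL (op a ga y) (op x de (op x be (op a de a))) (op (op s ga y) de (op x ga y)) be be)) (eq_trans (cL e a (HM (op (op (op s ga y) de (op x ga y)) be (op x de (op x be (op a de a)))) a y be ga)) eq_refl)))))))))))). Qed.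
Lemma E_ii : (op s e a) = (op (op x be (op a de a)) e (op s ga y)).
Proof using All. exact (eq_trans (cR s e Ha) (eq_trans (HM s (op x be (op a de a)) y e ga) eq_refl)). Qed.
End Aux.

Section Mem.
Variables (S G : Type) (op : S -> G -> S -> S) (A : S -> Prop).
Lemma memL (H : left_ideal op A) u g v : A v -> A (op u g v).
Proof. intro Hv. apply H. exists u, g, v. repeat split; auto. Qed.
Lemma memR (H : right_ideal op A) u g v : A u -> A (op u g v).
Proof. intro Hv. apply H. exists u, g, v. repeat split; auto. Qed.
Lemma memAA (H : subgroupoid op A) u g v : A u -> A v -> A (op u g v).
Proof. intros Hu Hv. apply H. exists u, g, v. repeat split; auto. Qed.
Lemma memGB (H : gen_bi_ideal op A) u g v d w : A u -> A w -> A (op (op u g v) d w).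
Proof. intros Hu Hw. apply H. exists (op u g v), d, w. repeat split; auto.
  exists u, g, v. repeat split; auto. Qed.
Lemma mem12 (H : subset (gprod op (gprod op A (fullset S)) (gprod op A A)) A)
  u g v d w e z : A u -> A w -> A z -> A (op (op u g v) d (op w e z)).
Proof. intros Hu Hw Hz. apply H. exists (op u g v), d, (op w e z). repeat split; auto.
  - exists u, g, v. repeat split; auto.
  - exists w, e, z. repeat split; auto. Qed.
Lemma memI (H : subset (gprod op (gprod op (fullset S) A) (fullset S)) A)
  u g v d w : A v -> A (op (op u g v) d w).
Proof. intros Hv. apply H. exists (op u g v), d, w. repeat split; auto.
  exists u, g, v. repeat split; auto. Qed.
End Mem.

Theorem mainTheorem9 (S G : Type) (op : S -> G -> S -> S)
  (s0 : S) (g0 : G)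
  (HS : is_GAGss op) (Hir : intra_regular op)
  (A : S -> Prop) (HA : exists a, A a) :
  (left_ideal op A <-> right_ideal op A) /\
  (left_ideal op A <-> two_sided_ideal op A) /\
  (left_ideal op A <-> (seteq (gprod op A (fullset S)) A /\ seteq (gprod op (fullset S) A) A)) /\
  (left_ideal op A <-> quasi_ideal op A) /\
  (left_ideal op A <-> one_two_ideal op A) /\
  (left_ideal op A <-> gen_bi_ideal op A) /\
  (left_ideal op A <-> bi_ideal op A) /\
  (left_ideal op A <-> interior_ideal op A).
Proof.
  destruct HS as [HL HM].
  assert (LR : left_ideal op A -> right_ideal op A).
  { intros H z (a & e & s & Aa & _ & ->).
    destruct (Hir a) as (x & y & be & ga & de & Ha).
    rewrite (E_lr S G op HL HM a s x y e be ga de Ha).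
    repeat apply memL; auto. }
  assert (RL : right_ideal op A -> left_ideal op A).
  { intros H z (s & e & a & _ & Aa & ->).
    destruct (Hir a) as (x & y & be & ga & de & Ha).
    rewrite (E_rl S G op HL HM a s x y e be ga de Ha).
    repeat apply memR; auto. }
  assert (LAA : left_ideal op A -> subgroupoid op A).
  { intros H z (u & g & v & _ & Av & ->). now apply memL. }
  split; [tauto|].
  split; [unfold two_sided_ideal; tauto|].
  split.
  { split.
    - intros H. split; intro z; split.
      + intros (u & g & v & Au & _ & ->). apply memR; auto.
      + intros Az. destruct (Hir z) as (x & y & be & ga & de & Ha).
        rewrite (E_as S G op HL HM z s0 x y g0 be ga de Ha).
        exists (op x be (op z de z)), ga, y. repeat split; auto.
        repeat apply memL; auto.
      + intros (u & g & v & _ & Av & ->). now apply memL.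
      + intros Az. destruct (Hir z) as (x & y & be & ga & de & Ha).
        rewrite (E_sa S G op HL HM z s0 x y g0 be ga de Ha).
        exists (op y be (op x de z)), ga, z. repeat split; auto.
    - intros [_ H] z Hz. now apply H. }
  split.
  { split.
    - intros H. split; [now apply LAA|]. intros z [Hz _]. now apply H.
    - intros [Hs Hq] z (s & e & a & _ & Aa & ->).
      destruct (Hir a) as (x & y & be & ga & de & Ha).
      apply Hq. split.
      + exists s, e, a. repeat split; auto.
      + rewrite (E_q S G op HL HM a s x y e be ga de Ha).
        eexists _, e, _. split; [|split; [exact I|reflexivity]].
        now apply memAA. }
  split.
  { split.
    - intros H. split; [now apply LAA|].
      intros z (p & d & q & _ & (w & g & v & Aw & Av & ->) & ->).
      apply memL; auto. now apply memAA; auto.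
    - intros [Hs H12] z (s & e & a & _ & Aa & ->).
      destruct (Hir a) as (x & y & be & ga & de & Ha).
      rewrite (E_ot S G op HL HM a s x y e be ga de Ha).
      apply mem12; auto; now apply memAA. }
  assert (GBL : gen_bi_ideal op A -> left_ideal op A).
  { intros H z (s & e & a & _ & Aa & ->).
    destruct (Hir a) as (x & y & be & ga & de & Ha).
    rewrite (E_gb S G op HL HM a s x y e be ga de Ha).
    apply memGB; auto. }
  assert (LGB : left_ideal op A -> gen_bi_ideal op A).
  { intros H z (p & d & w & _ & Aw & ->). now apply memL. }
  split; [tauto|].
  split.
  { split.
    - intros H. split; [now apply LAA | now apply LGB].
    - intros [_ H]. now apply GBL. }
  split.
  - intros H. split; [now apply LAA|].
    intros z (p & d & w & (u & g & v & _ & Av & ->) & _ & ->).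
    apply memR; [now apply LR|]. now apply memL.
  - intros [Hs HI] z (s & e & a & _ & Aa & ->).
    destruct (Hir a) as (x & y & be & ga & de & Ha).
    rewrite (E_ii S G op HL HM a s x y e be ga de Ha).
    apply memI; auto. now apply memAA.
Qed.
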